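(* Let $n\ge 2$, let $\Lambda$ be a positive integer, and let $V_\Lambda$ be the symmetric irreducible representation of $gl(n)$ (equivalently of $sl(n)$) whose highest weight corresponds to the Young tableau with row lengths $l_1=\Lambda$, $l_2=\dots=l_n=0$. Let $\widehat e^{\pm}_i$ ($i=1,\dots,n-1$) and $N_1,\dots,N_n$ be the crystal-basis generators of $gl(n)_{q\to 0}$ acting on $V_\Lambda$, as described in the context. Define, for $i=1,\dots,n-1$, $$E^{+}_{i}=\widehat e^{+}_{i}\,\sqrt{(N_i+1)\,N_{i+1}},\qquad E^{-}_{i}=\sqrt{(N_i+1)\,N_{i+1}}\;\widehat e^{-}_{i},\qquad H_i=N_i-N_{i+1}.$$ Then, as operators on $V_\Lambda$, these satisfy the defining relations of $sl(n)$ in the Cartan–Chevalley basis: $[H_i,E^{\pm}_j]=\pm a_{ji}E^{\pm}_j$, $[E^+_i,E^-_j]=\delta_{ij}H_i$, $[H_i,H_j]=0$, and the Serre relations $$\sum_{0\le m\le 1-a_{ij}}(-1)^m\binom{1-a_{ij}}{m}(E^{\pm}_i)^{1-a_{ij}-m}E^{\pm}_j(E^{\pm}_i)^m=0\quad(i\neq j),$$ where $(a_{ij})$ is the Cartan matrix of $sl(n)$, $a_{ii}=2$, $a_{ij}=-(\delta_{i-1,j}+\delta_{i,j-1})$ for $i\ne j$.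
   Context: For $q$ not a root of unity, $gl(n)_q$ is generated by $e^{\pm}_k$ ($k=1,\dots,n-1$) and $N_1,\dots,N_n$ with $[e^+_k,e^-_j]=\delta_{kj}[N_k-N_{k+1}]_q$, $[N_i,N_k]=0$, $[N_i,e^{\pm}_j]=\pm(\delta_{i,j}-\delta_{i-1,j})e^{\pm}_j$ and the $q$-Serre relations, where $[x]_q=(q^x-q^{-x})/(q-q^{-1})$. By Kashiwara's theory of crystal bases, in the limit $q\to 0$ there are operators $\widehat e^{\pm}_i$ (the crystal-basis generators) and a basis $\{\psi(\vec\Lambda;\vec\lambda)\}$ of each highest-weight irreducible representation with highest weight $\vec\Lambda$ such that: $h_i=N_i-N_{i+1}$ acts diagonally, $h_i\psi(\vec\Lambda;\vec\lambda)=\lambda_i\psi(\vec\Lambda;\vec\lambda)$; $\widehat e^{\pm}_i\psi(\vec\Lambda;\vec\lambda)=\psi(\vec\Lambda;\vec\lambda\pm\vec a_i)$ with $(\vec\lambda\pm\vec a_i)_j=\lambda_j\pm a_{ij}$, except that $\widehat e^+_i$ annihilates the states $\psi(\vec\Lambda;\vec\Lambda_i)$ at the top of the $i$-string and $\widehat e^-_i$ annihilates the states $\psi(\vec\Lambda;-\vec\Lambda_i)$ at the bottom of the $i$-string; consequently $\widehat e^+_i\widehat e^-_i$ (resp. $\widehat e^-_i\widehat e^+_i$) acts as the identity on all basis states not annihilated by $\widehat e^-_i$ (resp. $\widehat e^+_i$). Each basis state corresponds to a Young tableau with row lengths $l_1,\dots,l_n$ and is an eigenvector of $N_i$ with eigenvalue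 $l_i$, and $[N_i,\widehat e^{\pm}_k]=\pm(\delta_{i,k}-\delta_{i-1,k})\widehat e^{\pm}_k$. Square roots of functions of the commuting diagonal operators $N_i$ are taken on eigenvalues. *)

(* Defs.v *)
From HB Require Import structures.
From mathcomp Require Import all_boot all_order all_algebra.
Set Implicit Arguments. Unset Strict Implicit. Unset Printing Implicit Defensive.
Import Order.TTheory GRing.Theory Num.Theory.
Local Open Scope ring_scope.

(* Basis states of V_Lambda: one-row semistandard tableaux of length Lambda
   with entries in {1..n}, encoded by their contents m_1,...,m_n (m_k = number
   of boxes filled with k), i.e. the weights (l_1,...,l_n) = (m_1,...,m_n),
   with sum_k m_k = Lambda.  Each weight occurs exactly once. *)
Definition state (n Lam : nat) :=
  {m : {ffun 'I_n -> 'I_Lam.+1} | (\sum_(k < n) (m k : nat) == Lam)%N}.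
HB.instance Definition _ (n Lam : nat) := Finite.on (state n Lam).

Definition occ (n Lam : nat) (m : state n Lam) (k : 'I_n) : nat := val (val m k).

(* indices i = 1..n-1 are encoded 0-based by i : 'I_n.-1;
   ilo i is the (0-based) index i, ihi i is i+1, both in 'I_n *)
Lemma succ_lt_pred (n : nat) (i : 'I_n.-1) : (i.+1 < n)%N.
Proof. by case: i => i /=; case: n => [|n] //=. Qed.

Definition ilo (n : nat) (i : 'I_n.-1) : 'I_n := widen_ord (leq_pred n) i.
Definition ihi (n : nat) (i : 'I_n.-1) : 'I_n := Ordinal (succ_lt_pred i).

(* Operators on V_Lambda as matrices in the basis psi(m):
   entry (m', m) is the coefficient of psi(m') in A psi(m). *)
Definition opmx (R : nzRingType) (n Lam : nat)
    (f : state n Lam -> state n Lam -> R) : 'M[R]_#|{: state n Lam}| :=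
  \matrix_(a, b) f (enum_val a) (enum_val b).

Definition Nop (R : nzRingType) (n Lam : nat) (k : 'I_n) : 'M[R]_#|{: state n Lam}| :=
  opmx (fun m' m => if m' == m then (occ m k)%:R else 0).

Definition ehatp (R : nzRingType) (n Lam : nat) (i : 'I_n.-1) : 'M[R]_#|{: state n Lam}| :=
  opmx (fun m' m =>
    if (0 < occ m (ihi i))%N &&
       [forall k, occ m' k == (occ m k + (k == ilo i) - (k == ihi i))%N]
    then 1 else 0).

Definition ehatm (R : nzRingType) (n Lam : nat) (i : 'I_n.-1) : 'M[R]_#|{: state n Lam}| :=
  opmx (fun m' m =>
    if (0 < occ m (ilo i))%N &&
       [forall k, occ m' k == (occ m k - (k == ilo i) + (k == ihi i))%N]
    then 1 else 0).

Definition sqrtop (R : rcfType) (n Lam : nat) (i : 'I_n.-1) : 'M[R]_#|{: state n Lam}| :=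
  opmx (fun m' m => if m' == m
    then Num.sqrt (((occ m (ilo i)).+1 * occ m (ihi i))%N%:R) else 0).

Definition Eplus (R : rcfType) (n Lam : nat) (i : 'I_n.-1) : 'M[R]_#|{: state n Lam}| :=
  ehatp R Lam i *m sqrtop R Lam i.
Definition Eminus (R : rcfType) (n Lam : nat) (i : 'I_n.-1) : 'M[R]_#|{: state n Lam}| :=
  sqrtop R Lam i *m ehatm R Lam i.
Definition Hop (R : nzRingType) (n Lam : nat) (i : 'I_n.-1) : 'M[R]_#|{: state n Lam}| :=
  Nop R Lam (ilo i) - Nop R Lam (ihi i).

Definition comm (R : nzRingType) (k : nat) (A B : 'M[R]_k) : 'M[R]_k :=
  A *m B - B *m A.

Definition cartan (n : nat) (i j : 'I_n.-1) : int :=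
  if i == j then 2%R
  else if ((i : nat) == j.+1) || ((j : nat) == i.+1) then (-1)%R else 0%R.

Definition serre (R : nzRingType) (k : nat) (p : nat) (Xi Xj : 'M[R]_k) : 'M[R]_k :=
  \sum_(m < p.+1) ((-1) ^+ m * ('C(p, m))%:R) *: (Xi ^+ (p - m) *m Xj *m Xi ^+ m).

(* Main.v *)
Require Import Defs.
From mathcomp Require Import reals.
From HB Require Import structures.
From mathcomp Require Import all_boot all_order all_algebra.
From mathcomp Require Import ring lra zify.
Import Order.TTheory GRing.Theory Num.Theory.
Set Implicit Arguments. Unset Strict Implicit. Unset Printing Implicit Defensive.
Local Open Scope ring_scope.

Section Infra.
Variables (R : rcfType) (n Lam : nat).
Local Notation S := (state n Lam).
Local Notation vec := {ffun 'I_n -> int}.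

Definition occz (m : S) : vec := [ffun k => (occ m k)%:Z].
Definition vadd (x d : vec) : vec := [ffun k => x k + d k].
Definition shk (d : vec) (c : vec -> R) (m' m : S) : R :=
  if occz m' == vadd (occz m) d then c (occz m) else 0.
Definition valid (d : vec) (c : vec -> R) :=
  forall m : S, c (occz m) != 0 -> exists s : S, occz s = vadd (occz m) d.

Lemma occz_inj (m1 m2 : S) : occz m1 = occz m2 -> m1 = m2.
Proof.
move=> h; apply: val_inj; apply/ffunP => k; apply: val_inj.
have := congr1 (fun f : vec => f k) h; rewrite !ffunE /occ => -[].
done.
Qed.

Lemma vaddA x a b : vadd (vadd x a) b = vadd x (vadd a b).
Proof. by apply/ffunP => k; rewrite !ffunE addrA. Qed.

Lemma opmx_mul (f g : S -> S -> R) :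
  opmx f *m opmx g = opmx (fun m' m => \sum_s f m' s * g s m).
Proof.
apply/matrixP => a b; rewrite !mxE.
rewrite (big_enum_val (fun s : S => f (enum_val a) s * g s (enum_val b))).
by apply: eq_bigr => j _; rewrite !mxE.
Qed.

Lemma mul_shk d1 c1 d2 c2 : valid d2 c2 ->
  opmx (shk d1 c1) *m opmx (shk d2 c2) =
  opmx (shk (vadd d2 d1) (fun x => c1 (vadd x d2) * c2 x)).
Proof.
move=> hv; rewrite opmx_mul; apply/matrixP => a b; rewrite !mxE.
set m' := enum_val a; set m := enum_val b.
have [c0|cn0] := eqVneq (c2 (occz m)) 0.
  rewrite big1 => [|s _]; first by rewrite /shk c0 mulr0; case: ifP.
  by rewrite /shk c0; case: ifP; case: ifP; rewrite ?mulr0 ?mul0r.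
have [s0 hs0] := hv m cn0.
rewrite (bigD1 s0) //= big1 => [|s hs]; last first.
  rewrite [shk d2 _ _ _]/shk; case: ifP; rewrite ?mulr0 // => /eqP h.
  by move: hs; rewrite (occz_inj (etrans h (esym hs0))) eqxx.
rewrite addr0 /shk hs0 eqxx -vaddA.
by case: ifP; rewrite ?mul0r.
Qed.

Lemma valid0 c : valid [ffun _ => 0] c.
Proof. by move=> m _; exists m; apply/ffunP => k; rewrite !ffunE addr0. Qed.

Lemma occ_pair (m : S) (a b : 'I_n) : a != b -> (occ m a + occ m b <= Lam)%N.
Proof.
move=> hab; have hs : (\sum_(k<n) occ m k)%N = Lam := eqP (valP m).
apply: (leq_trans _ (eq_leq hs)).
rewrite (bigD1 a) //= (bigD1 b) /=; last by rewrite eq_sym.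
lia.
Qed.

Lemma occ_le (m : S) k : (occ m k <= Lam)%N.
Proof. by rewrite /occ -ltnS ltn_ord. Qed.

Lemma shift_ex (m : S) (a b : 'I_n) : a != b -> (0 < occ m b)%N ->
  exists s : S, occz s = vadd (occz m) [ffun k => (k == a)%:Z - (k == b)%:Z].
Proof.
move=> hab hb.
pose g k := (occ m k + (k == a) - (k == b))%N.
have gle k : (g k <= Lam)%N.
  rewrite /g; have := occ_pair m hab; have := occ_le m k.
  case: (eqVneq k a) => [->|ka] /=; first lia.
  lia.
pose f : {ffun 'I_n -> 'I_Lam.+1} := [ffun k => inord (g k)].
have fE k : (f k : nat) = g k by rewrite ffunE inordK // ltnS.
have hsum : (\sum_(k < n) (f k : nat) == Lam)%N.
  have hs : (\sum_(k<n) occ m k)%N = Lam := eqP (valP m).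
  apply/eqP; rewrite -[in RHS]hs (bigD1 a) //= (bigD1 b) /=; last by rewrite eq_sym.
  rewrite [in RHS](bigD1 a) //= [in RHS](bigD1 b) /=; last by rewrite eq_sym.
  rewrite (eq_bigr (fun k => occ m k)) => [|k /andP [kb ka]]; last first.
    by rewrite fE /g (negPf ka) (negPf kb) addn0 subn0.
  rewrite !fE /g eqxx (negPf hab) eq_sym (negPf hab) eqxx.
  lia.
exists (exist _ f hsum); apply/ffunP => k; rewrite !ffunE /occ /= fE /g.
move: hb hab; rewrite /occ.
case ea: (k == a); case eb: (k == b) => /=.
- by move: ea eb => /eqP -> /eqP ->; rewrite eqxx.
- move=> *; lia.
- move: eb => /eqP -> *; lia.
- move=> *; lia.
Qed.

Definition d0 : vec := [ffun _ => 0].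
Definition dP (i : 'I_n.-1) : vec := [ffun k => (k == ilo i)%:Z - (k == ihi i)%:Z].
Definition dM (i : 'I_n.-1) : vec := [ffun k => (k == ihi i)%:Z - (k == ilo i)%:Z].
Definition sqn (z : int) : R := Num.sqrt (z%:~R).
Definition hc (i : 'I_n.-1) (x : vec) : R := (x (ilo i))%:~R - (x (ihi i))%:~R.
Definition cP (i : 'I_n.-1) (x : vec) : R := sqn (x (ilo i) + 1) * sqn (x (ihi i)).
Definition cM (i : 'I_n.-1) (x : vec) : R := sqn (x (ilo i)) * sqn (x (ihi i) + 1).

Lemma lo_neq_hi (i : 'I_n.-1) : ilo i != ihi i.
Proof. by apply/eqP => /(congr1 val) /=; lia. Qed.

Lemma vadd0 x : vadd x d0 = x.
Proof. by apply/ffunP => k; rewrite !ffunE addr0. Qed.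

Lemma shk_ext d d' c c' : d = d' -> (forall m, c (occz m) = c' (occz m)) ->
  opmx (shk d c) = opmx (shk d' c').
Proof. by move=> -> h; apply/matrixP => a b; rewrite !mxE /shk h. Qed.

Lemma sqn0 : sqn 0 = 0.
Proof. by rewrite /sqn sqrtr0. Qed.

Lemma sqnz0 : sqn (Posz 0%N) = 0.
Proof. exact: sqn0. Qed.

Lemma sqn_sq z : 0 <= z -> sqn z * sqn z = z%:~R.
Proof. by move=> hz; rewrite -expr2 sqr_sqrtr // ler0z. Qed.

Lemma sqnM a b : 0 <= a -> Num.sqrt ((a * b)%:~R : R) = sqn a * sqn b.
Proof. by move=> ha; rewrite intrM sqrtrM // ler0z. Qed.

Lemma Nop_shk k : Nop R Lam k = opmx (shk d0 (fun x => (x k)%:~R)).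
Proof.
apply/matrixP => a b; rewrite !mxE /shk vadd0 (inj_eq (@occz_inj)) ffunE.
by case: ifP.
Qed.

Lemma Hop_shk i : Hop R Lam i = opmx (shk d0 (hc i)).
Proof.
apply/matrixP => a b; rewrite /Hop !Nop_shk !mxE /shk /hc.
by case: ifP; rewrite ?subr0.
Qed.

Lemma perk (x y : nat) (e f : bool) : ~~ (e && f) -> (f -> 0 < x)%N ->
  ((y == x + e - f)%N = (Posz y == Posz x + (Posz e - Posz f)))
  /\ ((y == x - f + e)%N = (Posz y == Posz x + (Posz e - Posz f))).
Proof.
case: e; case: f => //= _ h.
all: split; apply/eqP/eqP => E.
all: try (have := h isT => ?); lia.
Qed.

Lemma cond_shift (m m' : S) (a b : 'I_n) : a != b -> (0 < occ m b)%N ->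
  ([forall k, occ m' k == (occ m k + (k == a) - (k == b))%N] =
   (occz m' == vadd (occz m) [ffun k => (k == a)%:Z - (k == b)%:Z]))
  /\
  ([forall k, occ m' k == (occ m k - (k == b) + (k == a))%N] =
   (occz m' == vadd (occz m) [ffun k => (k == a)%:Z - (k == b)%:Z])).
Proof.
move=> hab hb.
have P k := perk (occ m' k) (e := k == a) (f := k == b) (x := occ m k).
have H1 k : ~~ ((k == a) && (k == b)).
  by apply/negP => /andP [/eqP -> /eqP e]; move: hab; rewrite e eqxx.
have H2 k : (k == b) -> (0 < occ m k)%N by move/eqP ->.
split; (apply/forallP/eqP => [H|H k];
  [apply/ffunP => k; rewrite !ffunE; apply/eqP; move: (H k);
     by rewrite ?(proj1 (P k (H1 k) (H2 k))) ?(proj2 (P k (H1 k) (H2 k)))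
  | rewrite ?(proj1 (P k (H1 k) (H2 k))) ?(proj2 (P k (H1 k) (H2 k)));
    have := congr1 (fun f : vec => f k) H; rewrite !ffunE => ->; by []]).
Qed.

Lemma ehatp_shk i : ehatp R Lam i = opmx (shk (dP i) (fun x => ((0 < x (ihi i))%R : bool)%:R)).
Proof.
apply/matrixP => a b; rewrite !mxE /shk.
set m' := enum_val a; set m := enum_val b.
case h: (0 < occ m (ihi i))%N => /=.
  by rewrite (proj1 (cond_shift m' (lo_neq_hi i) h)) ffunE ltz_nat h.
by rewrite ffunE ltz_nat h; case: ifP.
Qed.

Lemma ehatm_shk i : ehatm R Lam i = opmx (shk (dM i) (fun x => ((0 < x (ilo i))%R : bool)%:R)).
Proof.
apply/matrixP => a b; rewrite !mxE /shk.
set m' := enum_val a; set m := enum_val b.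
have hne : ihi i != ilo i by rewrite eq_sym lo_neq_hi.
case h: (0 < occ m (ilo i))%N => /=.
  by rewrite (proj2 (cond_shift m' hne h)) ffunE ltz_nat h.
by rewrite ffunE ltz_nat h; case: ifP.
Qed.

Lemma sqrtop_shk i : sqrtop R Lam i =
  opmx (shk d0 (fun x => Num.sqrt (((x (ilo i) + 1) * x (ihi i))%:~R))).
Proof.
apply/matrixP => a b; rewrite !mxE /shk vadd0 (inj_eq (@occz_inj)) !ffunE.
case: ifP => // _; congr Num.sqrt.
by rewrite intrM intrD natrM -addn1 natrD -!pmulrn.
Qed.

Lemma validP i : valid (dP i) (cP i).
Proof.
move=> m; rewrite /cP !ffunE.
case h: (occ m (ihi i)) => [|k]; first by rewrite sqnz0 mulr0 eqxx.
move=> _; apply: shift_ex; first exact: lo_neq_hi.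
by rewrite h.
Qed.

Lemma validM i : valid (dM i) (cM i).
Proof.
move=> m; rewrite /cM !ffunE.
case h: (occ m (ilo i)) => [|k]; first by rewrite sqnz0 mul0r eqxx.
move=> _; apply: shift_ex; first by rewrite eq_sym lo_neq_hi.
by rewrite h.
Qed.

Lemma Eplus_shk i : Eplus R Lam i = opmx (shk (dP i) (cP i)).
Proof.
rewrite /Eplus ehatp_shk sqrtop_shk mul_shk; last exact: valid0.
apply: shk_ext.
  by apply/ffunP => k; rewrite !ffunE add0r.
move=> m; rewrite /cP vadd0 !ffunE sqnM; last by rewrite addr_ge0.
case: (occ m (ihi i)) => [|k]; first by rewrite sqnz0 !mulr0.
by rewrite mul1r.
Qed.

Lemma validM' i : valid (dM i) (fun x => ((0 < x (ilo i))%R : bool)%:R).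
Proof.
move=> m; rewrite !ffunE ltz_nat.
case h: (occ m (ilo i)) => [|k]; first by rewrite eqxx.
move=> _; apply: shift_ex; first by rewrite eq_sym lo_neq_hi.
by rewrite h.
Qed.

Lemma Eminus_shk i : Eminus R Lam i = opmx (shk (dM i) (cM i)).
Proof.
rewrite /Eminus ehatm_shk sqrtop_shk mul_shk; last exact: validM'.
apply: shk_ext.
  by apply/ffunP => k; rewrite !ffunE addr0.
move=> m; rewrite /cM !ffunE !eqxx (negPf (lo_neq_hi i)) eq_sym (negPf (lo_neq_hi i)) ltz_nat.
case: (occ m (ilo i)) => [|k]; first by rewrite sqnz0 !mulr0 mul0r.
rewrite mulr1 sqnM /=; last lia.
congr (sqn _ * sqn _).
all: rewrite /= ?eqxx /=; lia.
Qed.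

Lemma shkB d1 d2 c1 c2 : d1 = d2 ->
  opmx (shk d1 c1) - opmx (shk d2 c2) = opmx (shk d1 (fun x => c1 x - c2 x)).
Proof.
move=> <-; apply/matrixP => a b; rewrite !mxE /shk.
by case: ifP; rewrite ?subr0.
Qed.

Lemma shkD d1 d2 c1 c2 : d1 = d2 ->
  opmx (shk d1 c1) + opmx (shk d2 c2) = opmx (shk d1 (fun x => c1 x + c2 x)).
Proof.
move=> <-; apply/matrixP => a b; rewrite !mxE /shk.
by case: ifP; rewrite ?addr0.
Qed.

Lemma shkZ d c (r : R) : r *: opmx (shk d c) = opmx (shk d (fun x => r * c x)).
Proof.
apply/matrixP => a b; rewrite !mxE /shk.
by case: ifP; rewrite ?mulr0.
Qed.

Lemma shkN d c : - opmx (shk d c) = opmx (shk d (fun x => - c x)).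
Proof.
apply/matrixP => a b; rewrite !mxE /shk.
by case: ifP; rewrite ?oppr0.
Qed.

Lemma shk_zero d c : (forall m, c (occz m) = 0) -> opmx (shk d c) = 0.
Proof.
move=> h; apply/matrixP => a b; rewrite !mxE /shk h.
by case: ifP.
Qed.

Lemma mx_expr2 k (A : 'M[R]_k) : A ^+ 2 = A *m A.
Proof. by rewrite expr2 mulmxE. Qed.
Lemma mx_expr1 k (A : 'M[R]_k) : A ^+ 1 = A.
Proof. by rewrite expr1. Qed.
Lemma mx_expr0 k (A : 'M[R]_k) : A ^+ 0 = 1%:M.
Proof. by rewrite expr0. Qed.

Lemma occz_ge0 (m : S) k : 0 <= occz m k.
Proof. by rewrite ffunE. Qed.

End Infra.

Lemma eq_lo_lo n (i j : 'I_n.-1) : (ilo i == ilo j) = ((i : nat) == j).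
Proof. by []. Qed.
Lemma eq_hi_hi n (i j : 'I_n.-1) : (ihi i == ihi j) = ((i : nat) == j).
Proof. by []. Qed.
Lemma eq_lo_hi n (i j : 'I_n.-1) : (ilo i == ihi j) = ((i : nat) == j.+1).
Proof. by []. Qed.
Lemma eq_hi_lo n (i j : 'I_n.-1) : (ihi i == ilo j) = (i.+1 == j).
Proof. by []. Qed.
Lemma ordE n (i j : 'I_n) : (i == j) = ((i : nat) == j).
Proof. by []. Qed.

Ltac natdec := repeat match goal with
 | |- context [ (?a == ?b :> nat) ] =>
     first [ rewrite (_ : (a == b :> nat) = true); last (apply/eqP; lia)
           | rewrite (_ : (a == b :> nat) = false); last (apply/negP => /eqP; lia) ] end.

Ltac sqnorm := repeat match goal with |- context [sqn _ ?z1] =>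
  match goal with |- context [sqn _ ?z2] =>
   assert_fails (constr_eq z1 z2); rewrite (_ : sqn _ z1 = sqn _ z2); last by congr sqn; lia end end.

Ltac dsimp := apply/ffunP => k; rewrite !ffunE; ring.

Ltac csimp0 := rewrite /cP /cM /hc /vadd /d0 /dP /dM /= !ffunE
   ?eq_lo_lo ?eq_hi_hi ?eq_lo_hi ?eq_hi_lo ?ordE; natdec; rewrite /=.
Ltac csimp := csimp0; sqnorm.

Ltac sqto t := repeat match goal with |- context [sqn _ ?z] =>
   assert_fails (constr_eq z t); rewrite (_ : sqn _ z = sqn _ t); last by congr sqn; lia end.

Ltac sexp := rewrite /serre !big_ord_recr big_ord0 /= add0r ?subn0 ?subnn ?subSnn
  ?mx_expr0 ?mx_expr1 ?mx_expr2 ?mulmx1 ?mul1mx ?bin0 ?bin1 ?binn ?mulmxA.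

Ltac sred := rewrite !mul_shk; try exact: validP; try exact: validM;
  rewrite !shkZ; rewrite ?shkD; try dsimp; apply: shk_zero => m; have hx := occz_ge0 m; csimp0.

Theorem mainTheorem1 (R : realType) (n Lam : nat) (hn : (2 <= n)%N) (hLam : (0 < Lam)%N) :
  [/\ (forall i j : 'I_n.-1,
         comm (Hop R Lam i) (Eplus R Lam j) = (cartan j i)%:~R *: Eplus R Lam j),
      (forall i j : 'I_n.-1,
         comm (Hop R Lam i) (Eminus R Lam j) = - ((cartan j i)%:~R *: Eminus R Lam j)),
      (forall i j : 'I_n.-1,
         comm (Eplus R Lam i) (Eminus R Lam j) = (i == j)%:R *: Hop R Lam i),
      (forall i j : 'I_n.-1, comm (Hop R Lam i) (Hop R Lam j) = 0) &
      ((forall i j : 'I_n.-1, i != j ->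
         serre `|1 - cartan i j|%N (Eplus R Lam i) (Eplus R Lam j) = 0)
      /\ (forall i j : 'I_n.-1, i != j ->
         serre `|1 - cartan i j|%N (Eminus R Lam i) (Eminus R Lam j) = 0))].
Proof.
have cases (i j : 'I_n.-1) (P : Prop) : (i = j -> P) -> ((j : nat) = (i : nat).+1 -> P) ->
   ((i : nat) = (j : nat).+1 -> P) ->
   ((i : nat) <> (j : nat) -> (j : nat) <> (i : nat).+1 -> (i : nat) <> (j : nat).+1 -> P) -> P.
  move=> h1 h2 h3 h4.
  case: (eqVneq (i : nat) (j : nat)) => [/val_inj /h1 //|e1].
  case: (eqVneq (j : nat) (i : nat).+1) => [/h2 //|e2].
  case: (eqVneq (i : nat) (j : nat).+1) => [/h3 //|e3].
  by apply: h4; apply/eqP.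
split.
- move=> i j; rewrite Hop_shk Eplus_shk /comm !mul_shk; try exact: valid0; try exact: validP.
  rewrite shkB; last by dsimp.
  rewrite shkZ; apply: shk_ext; first by dsimp.
  move=> m; have hx := occz_ge0 m.
  rewrite /cartan.
  have c := cases i j; apply: c => [<-|*|*|*]; csimp; ring.
- move=> i j; rewrite Hop_shk Eminus_shk /comm !mul_shk; try exact: valid0; try exact: validM.
  rewrite shkB; last by dsimp.
  rewrite shkZ shkN; apply: shk_ext; first by dsimp.
  move=> m; have hx := occz_ge0 m.
  rewrite /cartan.
  have c := cases i j; apply: c => [<-|*|*|*]; csimp; ring.
- move=> i j; rewrite Hop_shk Eminus_shk Eplus_shk /comm !mul_shk; try exact: validP; try exact: validM.
  have c := cases i j; apply: c => [<-|*|*|*].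
  + rewrite eqxx scale1r shkB; last by dsimp.
    apply: shk_ext; first by dsimp.
    move=> m; have hx := occz_ge0 m; csimp.
    rewrite [X in X - _]mulrACA [X in _ - X]mulrACA !sqn_sq; try lia.
    rewrite !intrD; ring.
  1-3: rewrite (_ : (i == j) = false); last by apply/negP => /eqP /(congr1 val) /=; lia.
  1-3: rewrite scale0r shkB; last by dsimp.
  1-3: apply: shk_zero => m; have hx := occz_ge0 m; csimp0.
  rewrite (_ : ilo j = ihi i); last by apply/val_inj => /=; lia.
  2: rewrite (_ : ilo i = ihi j); last by apply/val_inj => /=; lia.
  1-3: sqnorm.
  1-3: ring.
- move=> i j; rewrite !Hop_shk /comm !mul_shk; try exact: valid0.
  rewrite shkB; last by dsimp.
  apply: shk_zero => m; csimp; ring.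
split.
- move=> i j hij; rewrite !Eplus_shk.
  have c := cases i j; apply: c => [e|h|h|h1 h2 h3]; first by move: hij; rewrite e eqxx.
  + rewrite (_ : cartan i j = -1); last by rewrite /cartan ordE; natdec.
    rewrite (_ : absz (1 - (-1) : int) = 2%N) //.
    sexp. sred.
    rewrite (_ : ilo j = ihi i); last by apply/val_inj => /=; lia.
    set a := Posz (occ m (ilo i)); set b := Posz (occ m (ihi i)); set c := Posz (occ m (ihi j)).
    have ha : 0 <= a by []. have hb : 0 <= b by []. have hc : 0 <= c by [].
    sqto (a + 1); sqto (a + 2); sqto (b + 1); sqto b; sqto (b - 1); sqto c.
    transitivity (sqn R (a+1) * sqn R (a+2) * sqn R b * sqn R c *
      (sqn R (b+1) * sqn R (b+1) - 2 * (sqn R b * sqn R b) + sqn R (b-1) * sqn R (b-1))).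
      ring.
    have [b0|bp] := eqVneq b 0; first by rewrite b0 sqn0; ring.
    rewrite !sqn_sq; try lia.
    ring.
  + rewrite (_ : cartan i j = -1); last by rewrite /cartan ordE; natdec.
    rewrite (_ : absz (1 - (-1) : int) = 2%N) //.
    sexp. sred.
    rewrite (_ : ilo i = ihi j); last by apply/val_inj => /=; lia.
    set a := Posz (occ m (ilo j)); set b := Posz (occ m (ihi j)); set c := Posz (occ m (ihi i)).
    have ha : 0 <= a by []. have hb : 0 <= b by []. have hc : 0 <= c by [].
    sqto (a + 1); sqto b; sqto (b + 1); sqto (b + 2); sqto c; sqto (c - 1).
    transitivity (sqn R (a+1) * sqn R c * sqn R (c-1) * sqn R (b+1) *
      (sqn R b * sqn R b - 2 * (sqn R (b+1) * sqn R (b+1)) + sqn R (b+2) * sqn R (b+2))).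
      ring.
    rewrite !sqn_sq; try lia.
    ring.
  + rewrite (_ : cartan i j = 0); last by rewrite /cartan ordE; natdec.
    rewrite (_ : absz (1 - 0 : int) = 1%N) //.
    sexp. sred. sqnorm. ring.
- move=> i j hij; rewrite !Eminus_shk.
  have c := cases i j; apply: c => [e|h|h|h1 h2 h3]; first by move: hij; rewrite e eqxx.
  + rewrite (_ : cartan i j = -1); last by rewrite /cartan ordE; natdec.
    rewrite (_ : absz (1 - (-1) : int) = 2%N) //.
    sexp. sred.
    rewrite (_ : ilo j = ihi i); last by apply/val_inj => /=; lia.
    set a := Posz (occ m (ilo i)); set b := Posz (occ m (ihi i)); set c := Posz (occ m (ihi j)).
    have ha : 0 <= a by []. have hb : 0 <= b by []. have hc : 0 <= c by [].
    sqto a; sqto (a - 1); sqto b; sqto (b + 1); sqto (b + 2); sqto (c + 1).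
    transitivity (sqn R a * sqn R (a-1) * sqn R (c+1) * sqn R (b+1) *
      (sqn R b * sqn R b - 2 * (sqn R (b+1) * sqn R (b+1)) + sqn R (b+2) * sqn R (b+2))).
      ring.
    rewrite !sqn_sq; try lia.
    ring.
  + rewrite (_ : cartan i j = -1); last by rewrite /cartan ordE; natdec.
    rewrite (_ : absz (1 - (-1) : int) = 2%N) //.
    sexp. sred.
    rewrite (_ : ilo i = ihi j); last by apply/val_inj => /=; lia.
    set a := Posz (occ m (ilo j)); set b := Posz (occ m (ihi j)); set c := Posz (occ m (ihi i)).
    have ha : 0 <= a by []. have hb : 0 <= b by []. have hc : 0 <= c by [].
    sqto a; sqto b; sqto (b + 1); sqto (b - 1); sqto (c + 1); sqto (c + 2).
    transitivity (sqn R a * sqn R b * sqn R (c+1) * sqn R (c+2) *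
      (sqn R (b+1) * sqn R (b+1) - 2 * (sqn R b * sqn R b) + sqn R (b-1) * sqn R (b-1))).
      ring.
    have [b0|bp] := eqVneq b 0; first by rewrite b0 sqn0; ring.
    rewrite !sqn_sq; try lia.
    ring.
  + rewrite (_ : cartan i j = 0); last by rewrite /cartan ordE; natdec.
    rewrite (_ : absz (1 - 0 : int) = 1%N) //.
    sexp. sred. sqnorm. ring.
Qed.
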